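(* Assume $a_2\neq 0$, $b_2\neq 0$ and that the $h_k$ are pairwise distinct. With $z_1=qa_1/a_2$ and $y_1,y_2,y_3$ as defined, for all $n\geq k\geq 0$, $$c_{n,k}=\frac{b_2^{\,n-k}}{q^{(n-k)k}}\cdot\frac{(q^{k+1};q)_{n-k}\,(q^ky_1;q)_{n-k}\,(q^ky_2;q)_{n-k}\,(q^ky_3;q)_{n-k}}{(q;q)_{n-k}\,(z_1q^{n+k-1};q)_{n-k}}.$$
   Context: Fix $q\in\mathbb{C}$ with $q\neq 0$ and $|q|\neq 1$. Fix complex parameters $a_1,a_2,b_0,b_1,b_2,s_1,s_2$, put $s_0=-s_1-s_2$, and for $k\geq 0$ define $x_k=b_0+b_1q^k+b_2q^{-k}$, $h_k=a_1q^k+a_2q^{-k}$, $d_k=s_0+s_1q^k+s_2q^{-k}$. Let $g_0=0$ and $g_k=x_{k-1}(h_k-h_0)+d_k$ for $k\geq 1$. Define $c_{n,n}=1$ and $c_{n,k}=\prod_{j=k}^{n-1}\frac{g_{j+1}}{h_n-h_j}$ for $0\leq k<n$ (these are the coefficients of the monic polynomial $u_n(t)=\sum_{k=0}^nc_{n,k}v_k(t)$ in the Newton basis $v_k(t)=\prod_{i=0}^{k-1}(t-x_i)$). Put $z_1=qa_1/a_2$, $z_2=qb_1/b_2$, and let $y_1,y_2,y_3$ be the roots of the cubic with $y_1+y_2+y_3=z_1-\frac{b_0+s_2/a_2}{b_2}$, $y_1y_2+y_1y_3+y_2y_3=\frac{z_2}{q}-\frac{qs_1/a_2+b_0z_1}{b_2}$,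 $y_1y_2y_3=\frac{z_1z_2}{q}$. $(t;q)_k=\prod_{i=0}^{k-1}(1-q^it)$. *)

(* Defs.v *)
From HB Require Import structures.
From mathcomp Require Import all_boot all_order all_algebra.
From mathcomp Require Export complex.
From mathcomp Require Export reals.
Set Implicit Arguments. Unset Strict Implicit. Unset Printing Implicit Defensive.
Import Order.TTheory GRing.Theory Num.Theory.
Local Open Scope ring_scope.

Section Defs.
Variable C : fieldType.

(* q-Pochhammer symbol (t;q)_k = prod_{i=0}^{k-1} (1 - q^i t) *)
Definition qpoch (q t : C) (k : nat) : C := \prod_(i < k) (1 - q ^+ i * t).

Definition xk (q b0 b1 b2 : C) (k : nat) : C := b0 + b1 * q ^+ k + b2 * q ^- k.
Definition hk (q a1 a2 : C) (k : nat) : C := a1 * q ^+ k + a2 * q ^- k.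
Definition dk (q s1 s2 : C) (k : nat) : C := (- s1 - s2) + s1 * q ^+ k + s2 * q ^- k.
Definition gk (q a1 a2 b0 b1 b2 s1 s2 : C) (k : nat) : C :=
  if k is k'.+1 then
    xk q b0 b1 b2 k' * (hk q a1 a2 k - hk q a1 a2 0) + dk q s1 s2 k
  else 0.
Definition cnk (q a1 a2 b0 b1 b2 s1 s2 : C) (n k : nat) : C :=
  \prod_(k <= j < n) (gk q a1 a2 b0 b1 b2 s1 s2 j.+1 / (hk q a1 a2 n - hk q a1 a2 j)).
End Defs.

(* Main.v *)
Require Import Defs.
From HB Require Import structures.
From mathcomp Require Import all_boot all_order all_algebra.
From mathcomp Require Import complex reals.
From mathcomp Require Import ring zify.
Import Order.TTheory GRing.Theory Num.Theory.
Local Open Scope ring_scope.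

Section S.
Variable C : fieldType.

Lemma qpochS (q t : C) m : qpoch q t m.+1 = (1 - t) * qpoch q (q * t) m.
Proof.
rewrite /qpoch big_ord_recl /= expr0 mul1r; congr (_ * _).
by apply: eq_bigr => i _; rewrite /bump /= add1n exprS -mulrA mulrCA.
Qed.

Lemma qpochSr (q t : C) m : qpoch q t m.+1 = qpoch q t m * (1 - q ^+ m * t).
Proof. by rewrite /qpoch big_ord_recr. Qed.

Lemma qpoch0 (q t : C) : qpoch q t 0 = 1.
Proof. by rewrite /qpoch big_ord0. Qed.

Lemma expz_pred (q : C) N : (0 < N)%N -> q ^ (N%:Z - 1) = q ^+ N.-1.
Proof. by case: N => // N _; rewrite intS addrC addKr. Qed.

Lemma gk_fact (q a1 a2 b0 b1 b2 s1 s2 y1 y2 y3 : C) k :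
  q != 0 -> a2 != 0 -> b2 != 0 ->
  y1 + y2 + y3 = q * a1 / a2 - (b0 + s2 / a2) / b2 ->
  y1 * y2 + y1 * y3 + y2 * y3 = (q * b1 / b2) / q - (q * s1 / a2 + b0 * (q * a1 / a2)) / b2 ->
  y1 * y2 * y3 = (q * a1 / a2) * (q * b1 / b2) / q ->
  gk q a1 a2 b0 b1 b2 s1 s2 k.+1 =
   - (a2 * b2 * q) * (q * q ^+ k - 1) *
     ((1 - q ^+ k * y1) * (1 - q ^+ k * y2) * (1 - q ^+ k * y3)) / (q * q ^+ k) ^+ 2.
Proof.
move=> q0 a0 b0' H1 H2 H3.
have u0 : q ^+ k != 0 by rewrite expf_neq0.
have -> : (1 - q ^+ k * y1) * (1 - q ^+ k * y2) * (1 - q ^+ k * y3) =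
  1 - q ^+ k * (y1 + y2 + y3) + q ^+ k ^+ 2 * (y1 * y2 + y1 * y3 + y2 * y3)
  - q ^+ k ^+ 3 * (y1 * y2 * y3) by ring.
rewrite H1 H2 H3 /gk /xk /hk /dk exprS expr0 invr1 /=.
move: (q ^+ k) u0 => u u0.
by field; rewrite ?q0 ?u0 ?a0 ?b0' ?mulf_neq0.
Qed.

Lemma hdiff (q a1 a2 : C) k m : q != 0 -> a2 != 0 ->
  hk q a1 a2 (k.+1 + m) - hk q a1 a2 k =
  (a2 / (q ^+ k * (q ^+ m * q))) * (1 - q ^+ m * q) *
   (1 - (q * a1 / a2) * (q ^+ k * q ^+ m * q ^+ k)).
Proof.
move=> q0 a0; have u0 : q ^+ k != 0 by rewrite expf_neq0.
have r0 : q ^+ m != 0 by rewrite expf_neq0.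
rewrite /hk addSn exprS exprD.
move: (q ^+ k) (q ^+ m) u0 r0 => u r u0 r0.
by field; rewrite ?q0 ?u0 ?r0 ?a0 ?mulf_neq0.
Qed.
End S.

Lemma main_ind (C : fieldType) (q a1 a2 b0 b1 b2 s1 s2 y1 y2 y3 : C) :
  q != 0 -> a2 != 0 -> b2 != 0 ->
  (forall i j : nat, i <> j -> hk q a1 a2 i != hk q a1 a2 j) ->
  y1 + y2 + y3 = q * a1 / a2 - (b0 + s2 / a2) / b2 ->
  y1 * y2 + y1 * y3 + y2 * y3 = (q * b1 / b2) / q - (q * s1 / a2 + b0 * (q * a1 / a2)) / b2 ->
  y1 * y2 * y3 = (q * a1 / a2) * (q * b1 / b2) / q ->
  forall m k, cnk q a1 a2 b0 b1 b2 s1 s2 (k + m) k =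
   b2 ^+ m / q ^+ (m * k) *
      ((qpoch q (q ^+ k.+1) m * qpoch q (q ^+ k * y1) m
        * qpoch q (q ^+ k * y2) m * qpoch q (q ^+ k * y3) m)
       / (qpoch q q m * qpoch q (q * a1 / a2 * q ^ ((k + m + k)%:Z - 1)) m)).
Proof.
move=> q0 a0 b0' hd H1 H2 H3.
elim=> [|m IH] k.
  by rewrite /cnk addn0 big_geq // !qpoch0 expr0 mul0n expr0 !(mul1r, mulr1, invr1).
rewrite -addSnnS /cnk big_ltn; last by lia.
rewrite -/(cnk q a1 a2 b0 b1 b2 s1 s2 (k.+1 + m) k.+1) IH.
rewrite (@gk_fact _ q a1 a2 b0 b1 b2 s1 s2 y1 y2 y3 k q0 a0 b0' H1 H2 H3) hdiff //.
have hne : hk q a1 a2 (k.+1 + m) != hk q a1 a2 k by apply: hd; lia.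
rewrite -subr_eq0 hdiff // in hne.
have hp : 1 - q ^+ m * q != 0 by apply/eqP => e; move: hne; rewrite e mulr0 mul0r eqxx.
have hw : 1 - q * a1 / a2 * (q ^+ k * q ^+ m * q ^+ k) != 0
  by apply/eqP => e; move: hne; rewrite e mulr0 eqxx.
rewrite (@qpochSr _ q q) !qpochS !(mulrA q (q ^+ k)) -!exprS.
rewrite !expz_pred; [|lia|lia].
have -> : ((k.+1 + m + k.+1).-1 = (k + m + k).+1)%N by lia.
have -> : ((k.+1 + m + k).-1 = k + m + k)%N by lia.
have -> : q * (q * a1 / a2 * q ^+ (k + m + k)) = q * a1 / a2 * q ^+ (k + m + k).+1
  by rewrite exprS; ring.
move: (qpoch q (q ^+ k.+2) m) (qpoch q (q ^+ k.+1 * y1) m)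
  (qpoch q (q ^+ k.+1 * y2) m) (qpoch q (q ^+ k.+1 * y3) m)
  (qpoch q q m) (qpoch q (q * a1 / a2 * q ^+ (k + m + k).+1) m) => A B1 B2 B3 D E.
have -> : q ^+ (m * k.+1) = q ^+ (m * k) * q ^+ m by rewrite mulnS exprD mulrC.
have -> : q ^+ (m.+1 * k) = q ^+ (m * k) * q ^+ k by rewrite mulSn exprD mulrC.
rewrite (exprD q (k + m) k) (exprD q k m) !exprS.
have u0 : q ^+ k != 0 by rewrite expf_neq0.
have r0 : q ^+ m != 0 by rewrite expf_neq0.
have t0 : q ^+ (m * k) != 0 by rewrite expf_neq0.
rewrite !invfM.
move: (D^-1) (E^-1) => Di Ei.
move: (q ^+ k) (q ^+ m) (q ^+ (m * k)) (b2 ^+ m) u0 r0 t0 hp hw => u r T B u0 r0 t0 hp hw.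
have hw' : a2 - q * a1 * (u * r * u) != 0.
  have -> : a2 - q * a1 * (u * r * u) = a2 * (1 - q * a1 / a2 * (u * r * u)) by field.
  by rewrite mulf_neq0.
by field; rewrite q0 u0 r0 t0 a0 hp hw' oner_neq0.
Qed.

Local Open Scope complex_scope.

Theorem mainTheorem8 (R : realType) (q a1 a2 b0 b1 b2 s1 s2 y1 y2 y3 : R[i]) :
  q != 0 -> `|q| != 1 ->
  a2 != 0 -> b2 != 0 ->
  (forall i j : nat, i <> j -> hk q a1 a2 i != hk q a1 a2 j) ->
  let z1 := q * a1 / a2 in
  let z2 := q * b1 / b2 in
  y1 + y2 + y3 = z1 - (b0 + s2 / a2) / b2 ->
  y1 * y2 + y1 * y3 + y2 * y3 = z2 / q - (q * s1 / a2 + b0 * z1) / b2 ->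
  y1 * y2 * y3 = z1 * z2 / q ->
  forall n k : nat, (k <= n)%N ->
    cnk q a1 a2 b0 b1 b2 s1 s2 n k =
      b2 ^+ (n - k) / q ^+ ((n - k) * k) *
      ((qpoch q (q ^+ k.+1) (n - k) * qpoch q (q ^+ k * y1) (n - k)
        * qpoch q (q ^+ k * y2) (n - k) * qpoch q (q ^+ k * y3) (n - k))
       / (qpoch q q (n - k) * qpoch q (z1 * q ^ ((n + k)%:Z - 1)) (n - k))).

Proof.
move=> q0 _ a0 b0' hd z1 z2 H1 H2 H3 n k kn.
rewrite /z1 /z2 in H1 H2 H3 *.
have [m ->] : exists m, n = (k + m)%N by exists (n - k)%N; lia.
rewrite addKn.
exact: main_ind.
Qed.
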